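(* For any integer $k>0$ and any homogeneous $f\in\mathbb{C}(x_0,\dots,x_n)$ one has $\eta(\xi^k(f))=k(\deg(f)-k+1)\,\xi^{k-1}(f)$.
   Context: Here $\xi^k(f)=\sum_{|I|=k}\binom{k}{I}x^I\otimes\partial^I f\in\mathbb{C}[x_0,\dots,x_n]\otimes\mathbb{C}(x_0,\dots,x_n)$, with $I=(i_0,\dots,i_n)$ a multi-index, $|I|=i_0+\cdots+i_n$, $\binom{k}{I}=k!/(i_0!\cdots i_n!)$, $x^I=x_0^{i_0}\cdots x_n^{i_n}$, $\partial^I=\partial_{x_0}^{i_0}\cdots\partial_{x_n}^{i_n}$; $\xi^0(f)=1\otimes f$. The operator $\eta=\sum_{j}\partial_{x_j}\otimes x_j$ acts on $\mathbb{C}[x]\otimes\mathbb{C}(x)$ by $\eta(p\otimes g)=\sum_j\partial_{x_j}p\otimes x_jg$. $\deg(f)$ is the homogeneity degree of $f$. *)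

(* Defs.v *)
From HB Require Import structures.
From mathcomp Require Import all_boot all_order all_algebra.
From mathcomp Require Import generic_quotient fraction.
From mathcomp Require Import complex.
From mathcomp Require Import Rstruct.
From mathcomp Require Import mpoly.
From Stdlib Require Import Rdefinitions.

Set Implicit Arguments.
Unset Strict Implicit.
Unset Printing Implicit Defensive.

Import GRing.Theory.
Local Open Scope ring_scope.

Notation CC := (complex Rdefinitions.R).

Definition Pol (n : nat) := {mpoly CC[n.+1]}.
Definition RatF (n : nat) := {fraction {mpoly CC[n.+1]}}.

Definition toF n (p : {mpoly CC[n.+1]}) : RatF n := FracField.tofrac p.

(* The tensor product C[x_0..x_n] (x) C(x_0..x_n) is represented, via the
   canonical isomorphism p (x) g |-> g * p, as the polynomial ring
   C(x)[y_0..y_n] : the y-variables are the first tensor factor. *)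
Definition Tens (n : nat) := {mpoly (RatF n)[n.+1]}.

Definition fderiv n (i : 'I_n.+1) (f : RatF n) : RatF n :=
  let r := repr f in
  let p := \n_r in let q := \d_r in
  toF (mderiv i p * q - p * mderiv i q) / toF (q * q).

Definition fderivI n (I : 'X_{1..n.+1}) (f : RatF n) : RatF n :=
  foldr (fun i g => iter (I i) (fderiv i) g) f (enum 'I_n.+1).

Definition multinom n (k : nat) (I : 'X_{1..n.+1}) : nat :=
  divn (factorial k) (\prod_(i < n.+1) factorial (I i))%N.

Definition xi n (k : nat) (f : RatF n) : Tens n :=
  \sum_(I : 'X_{1..n.+1 < k.+1} | mdeg I == k)
     ((multinom k I)%:R * fderivI I f) *: 'X_[(I : 'X_{1..n.+1})].

Definition eta_op n (P : Tens n) : Tens n :=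
  \sum_(j < n.+1) toF 'X_j *: mderiv j P.

Definition homog_frac n (d : int) (f : RatF n) : Prop :=
  exists (p q : {mpoly CC[n.+1]}) (da db : nat),
    [/\ q != 0, p \is da.-homog, q \is db.-homog,
        da%:Z - db%:Z = d & f = toF p / toF q].

(* Main.v *)
Require Import Defs.
From HB Require Import structures.
From mathcomp Require Import all_boot all_order all_algebra.
From mathcomp Require Import generic_quotient fraction complex Rstruct mpoly.
From mathcomp Require Import ring zify.
Import GRing.Theory.
Local Open Scope ring_scope.
Local Open Scope quotient_scope.
Local Notation "x %:F" := (@FracField.tofrac _ x).

Lemma frac_pi (R : idomainType) (x : {ratio R}) :
  (\pi x : {fraction R}) = (\n_x)%:F / (\d_x)%:F.
Proof.
have dx : (\d_x)%:F != 0 :> {fraction R} by rewrite tofrac_eq0 denom_ratioP.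
apply: (canRL (mulfK dx)).
unlock tofrac.
rewrite !piE. apply/eqmodP; rewrite /= FracField.equivfE.
rewrite /FracField.mulf !numden_Ratio ?oner_eq0 ?mulf_neq0 ?denom_ratioP //.
- by rewrite !mulr1 mulrC.
all: exact: oner_neq0.
Qed.

Lemma frac_repr (R : idomainType) (f : {fraction R}) :
  f = (\n_(repr f))%:F / (\d_(repr f))%:F.
Proof. by rewrite -frac_pi reprK. Qed.

Lemma toF_inj {n} (p q : Pol n) : toF p = toF q -> p = q.
Proof. by move/eqP; rewrite /toF tofrac_eq => /eqP. Qed.

Lemma toF_neq0 {n} {p : Pol n} : p != 0 -> toF p != 0.
Proof. by rewrite /toF tofrac_eq0. Qed.

Lemma toFD {n} (p q : Pol n) : toF (p + q) = toF p + toF q.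
Proof. exact: rmorphD. Qed.
Lemma toFB {n} (p q : Pol n) : toF (p - q) = toF p - toF q.
Proof. exact: rmorphB. Qed.
Lemma toFM {n} (p q : Pol n) : toF (p * q) = toF p * toF q.
Proof. exact: rmorphM. Qed.
Lemma toF1 {n} : toF (1 : Pol n) = 1.
Proof. exact: rmorph1. Qed.
Lemma toFMn {n} k (p : Pol n) : toF (p *+ k) = toF p *+ k.
Proof. exact: rmorphMn. Qed.

Lemma toF0 {n} : toF (0 : Pol n) = 0.
Proof. exact: rmorph0. Qed.

Lemma frac_aux (R : comRingType) (p p' q q' N N' D D' : R) :
  p * D = N * q -> p' * D + p * D' = N' * q + N * q' ->
  (N' * D - N * D') * (q * q) = (p' * q - p * q') * (D * D).
Proof.
move=> H1 H2; apply/eqP; rewrite -subr_eq0; apply/eqP.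
transitivity ((q' * D + q * D') * (p * D - N * q)
   - (q * D) * ((p' * D + p * D') - (N' * q + N * q'))); first ring.
by rewrite H1 H2 !subrr !mulr0 subrr.
Qed.

Lemma div_eq_aux {n} (a b c e : Pol n) : b != 0 -> e != 0 -> a * e = c * b ->
  toF a / toF b = toF c / toF e.
Proof.
move=> b0 e0 h; apply/eqP; rewrite eqr_div; [|exact: toF_neq0 b0|exact: toF_neq0 e0].
by rewrite -!toFM h.
Qed.

Lemma fderiv_frac {n} i (p q : Pol n) : q != 0 ->
  fderiv i (toF p / toF q) =
  toF (mderiv i p * q - p * mderiv i q) / toF (q * q).
Proof.
move=> q0; rewrite /fderiv.
set r := repr _.
have hf : toF p / toF q = toF \n_r / toF \d_r by apply: frac_repr.
have dr : \d_r != 0 := denom_ratioP _.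
set N := \n_r in hf *; set D := \d_r in hf dr *.
have H1 : p * D = N * q.
  apply: toF_inj; rewrite !toFM; apply/eqP.
  rewrite -eqr_div; [exact/eqP| exact: toF_neq0 q0 | exact: toF_neq0 dr].
have H2 := congr1 (mderiv i) H1; rewrite !mderivM in H2.
set A := (X in toF X / toF _ = _); set B := (X in toF _ / toF X = _).
have key : A * (q * q) = (mderiv i p * q - p * mderiv i q) * B.
  rewrite /A /B; exact: frac_aux.
have hB : B != 0 by rewrite /B; exact: (mulf_neq0 dr dr).
exact: (@div_eq_aux n A B _ _ hB (mulf_neq0 q0 q0) key).
Qed.

Lemma fracP {n} (f : RatF n) : exists a b : Pol n, b != 0 /\ f = toF a / toF b.
Proof. exists \n_(repr f), \d_(repr f); split; [exact: denom_ratioP|exact: frac_repr]. Qed.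

Lemma fderiv_toF {n} i (p : Pol n) : fderiv i (toF p) = toF (mderiv i p).
Proof.
have -> : toF p = toF p / toF 1 by rewrite toF1 divr1.
rewrite fderiv_frac ?oner_neq0 //.
have -> : mderiv i (1 : Pol n) = 0 by rewrite -(mderivC i 1).
by rewrite !mulr1 mulr0 subr0 toF1 divr1.
Qed.

Lemma addf_aux (F : fieldType) (a b c e : F) : b != 0 -> e != 0 ->
  a / b + c / e = (a * e + c * b) / (b * e).
Proof. by move=> hb he; field; rewrite ?hb ?he. Qed.

Lemma mulf_aux (F : fieldType) (a b c e : F) : b != 0 -> e != 0 ->
  a / b * (c / e) = (a * c) / (b * e).
Proof. by move=> hb he; field; rewrite ?hb ?he. Qed.

Lemma fracD_gen (R : comRingType) (F : fieldType) (phi : R -> F)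
  (phiD : forall x y, phi (x + y) = phi x + phi y)
  (phiB : forall x y, phi (x - y) = phi x - phi y)
  (phiM : forall x y, phi (x * y) = phi x * phi y)
  (dR : R -> R) (dD : forall x y, dR (x + y) = dR x + dR y)
  (dM : forall x y, dR (x * y) = dR x * y + x * dR y) (a b c e : R) :
  phi b != 0 -> phi e != 0 ->
  phi (dR (a * e + c * b) * (b * e) - (a * e + c * b) * dR (b * e)) / phi (b * e * (b * e))
  = phi (dR a * b - a * dR b) / phi (b * b) + phi (dR c * e - c * dR e) / phi (e * e).
Proof.
move=> hb he; rewrite dD !dM !(phiB, phiD, phiM).
by field; rewrite ?hb ?he.
Qed.

Lemma fracM_gen (R : comRingType) (F : fieldType) (phi : R -> F)
  (phiD : forall x y, phi (x + y) = phi x + phi y)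
  (phiB : forall x y, phi (x - y) = phi x - phi y)
  (phiM : forall x y, phi (x * y) = phi x * phi y)
  (dR : R -> R) (dD : forall x y, dR (x + y) = dR x + dR y)
  (dM : forall x y, dR (x * y) = dR x * y + x * dR y) (a b c e : R) :
  phi b != 0 -> phi e != 0 ->
  phi (dR (a * c) * (b * e) - (a * c) * dR (b * e)) / phi (b * e * (b * e))
  = phi (dR a * b - a * dR b) / phi (b * b) * (phi c / phi e)
    + phi a / phi b * (phi (dR c * e - c * dR e) / phi (e * e)).
Proof.
move=> hb he; rewrite !dM !(phiB, phiD, phiM).
by field; rewrite ?hb ?he.
Qed.

Lemma fderivD {n} i (f g : RatF n) : fderiv i (f + g) = fderiv i f + fderiv i g.
Proof.
have [a [b [b0 ->]]] := fracP f; have [c [e [e0 ->]]] := fracP g.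
have hb := toF_neq0 b0; have he := toF_neq0 e0.
have -> : toF a / toF b + toF c / toF e = toF (a * e + c * b) / toF (b * e).
  by rewrite toFD !toFM (@addf_aux _ _ _ _ _ hb he).
rewrite (fderiv_frac _ _ _ (mulf_neq0 b0 e0)) (fderiv_frac _ _ _ b0) (fderiv_frac _ _ _ e0).
exact: (@fracD_gen (Pol n) (RatF n) (@toF n) (@toFD n) (@toFB n) (@toFM n) (mderiv i)
   (mderivD i) (mderivM i) a b c e hb he).
Qed.

Lemma fderivM {n} i (f g : RatF n) :
  fderiv i (f * g) = fderiv i f * g + f * fderiv i g.
Proof.
have [a [b [b0 ->]]] := fracP f; have [c [e [e0 ->]]] := fracP g.
have hb := toF_neq0 b0; have he := toF_neq0 e0.
have -> : toF a / toF b * (toF c / toF e) = toF (a * c) / toF (b * e).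
  by rewrite !toFM (@mulf_aux _ _ _ _ _ hb he).
rewrite (fderiv_frac _ _ _ (mulf_neq0 b0 e0)) (fderiv_frac _ _ _ b0) (fderiv_frac _ _ _ e0).
exact: (@fracM_gen (Pol n) (RatF n) (@toF n) (@toFD n) (@toFB n) (@toFM n) (mderiv i)
   (mderivD i) (mderivM i) a b c e hb he).
Qed.

Lemma fderiv0 {n} i : fderiv i (0 : RatF n) = 0.
Proof.
have h := fderivD i (0 : RatF n) 0; rewrite addr0 in h.
by rewrite -[LHS]addr0 in h; move/addrI: h.
Qed.

Lemma fderivN {n} i (f : RatF n) : fderiv i (- f) = - fderiv i f.
Proof.
have h := fderivD i f (- f); rewrite subrr fderiv0 in h.
by apply/eqP; rewrite -addr_eq0 addrC -h.
Qed.

Lemma fderivB {n} i (f g : RatF n) : fderiv i (f - g) = fderiv i f - fderiv i g.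
Proof. by rewrite fderivD fderivN. Qed.

Lemma fderiv_sum {n} i (I : Type) (r : seq I) (P : pred I) (F : I -> RatF n) :
  fderiv i (\sum_(x <- r | P x) F x) = \sum_(x <- r | P x) fderiv i (F x).
Proof. exact: (big_morph _ (fderivD i) (fderiv0 i)). Qed.

Lemma fderiv1 {n} i : fderiv i (1 : RatF n) = 0.
Proof.
rewrite -(toF1 (n:=n)) fderiv_toF.
have -> : mderiv i (1 : Pol n) = 0 by rewrite -(mderivC i 1).
exact: toF0.
Qed.

Lemma fderiv_nat {n} i m : fderiv i (m%:R : RatF n) = 0.
Proof.
elim: m => [|m IH]; first exact: fderiv0.
by rewrite mulrSr fderivD fderiv1 IH addr0.
Qed.

Lemma fderiv_int {n} i (z : int) : fderiv i (z%:~R : RatF n) = 0.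
Proof.
case: z => m; first exact: fderiv_nat.
by rewrite NegzE rmorphN /= fderivN fderiv_nat oppr0.
Qed.

Lemma fderivZint {n} i (z : int) (g : RatF n) :
  fderiv i (z%:~R * g) = z%:~R * fderiv i g.
Proof. by rewrite fderivM fderiv_int mul0r add0r. Qed.

Lemma comm_gen (F : fieldType) (d1 d2 : F -> F)
  (hD1 : forall x y, d1 (x + y) = d1 x + d1 y)
  (hD2 : forall x y, d2 (x + y) = d2 x + d2 y)
  (hM1 : forall x y, d1 (x * y) = d1 x * y + x * d1 y)
  (hM2 : forall x y, d2 (x * y) = d2 x * y + x * d2 y) (g u : F) :
  u != 0 -> d1 (d2 u) = d2 (d1 u) -> d1 (d2 (g * u)) = d2 (d1 (g * u)) ->
  d1 (d2 g) = d2 (d1 g).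
Proof.
move=> u0 H1 H2.
have E : (d1 (d2 g) - d2 (d1 g)) * u =
   (d1 (d2 (g * u)) - d2 (d1 (g * u))) - g * (d1 (d2 u) - d2 (d1 u)).
  by rewrite !(hM1, hM2, hD1, hD2); ring.
rewrite H2 H1 !subrr mulr0 subr0 in E; move/eqP: E.
by rewrite mulf_eq0 (negbTE u0) orbF subr_eq0 => /eqP.
Qed.

Lemma fderiv_comm {n} i j (g : RatF n) :
  fderiv i (fderiv j g) = fderiv j (fderiv i g).
Proof.
have [a [b [b0 eg]]] := fracP g.
have hb := toF_neq0 b0.
apply: (@comm_gen (RatF n) (fderiv i) (fderiv j) (fderivD i) (fderivD j)
  (fderivM i) (fderivM j) g (toF b) hb).
  by rewrite !fderiv_toF mderiv_comm.
have -> : g * toF b = toF a by rewrite eg mulfVK.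
by rewrite !fderiv_toF mderiv_comm.
Qed.
Definition Emp {n} (p : Pol n) : Pol n := \sum_(j < n.+1) 'X_j * mderiv j p.

Lemma Emp0 {n} : Emp (0 : Pol n) = 0.
Proof. by rewrite /Emp big1 // => j _; rewrite mderiv0 mulr0. Qed.

Lemma EmpD {n} (p q : Pol n) : Emp (p + q) = Emp p + Emp q.
Proof. by rewrite /Emp -big_split /=; apply: eq_bigr => j _; rewrite mderivD mulrDr. Qed.

Lemma EmpZ {n} c (p : Pol n) : Emp (c *: p) = c *: Emp p.
Proof. by rewrite /Emp scaler_sumr; apply: eq_bigr => j _; rewrite mderivZ scalerAr. Qed.

Lemma EmpX {n} (m : 'X_{1..n.+1}) : Emp ('X_[m] : Pol n) = (mdeg m)%:R *: 'X_[m].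
Proof.
rewrite /Emp mdegE natr_sum scaler_suml; apply: eq_bigr => j _.
rewrite mderivX -scalerAr.
have [mj0|mjp] := posnP (m j); first by rewrite mj0 !scale0r.
congr (_ *: _); rewrite -mpolyXD addmC submK //.
apply/mnm_lepP => i; rewrite mnm1E; case: eqP => [<-|_] //.
Qed.

Lemma euler_mpoly {n} (p : Pol n) (da : nat) : p \is da.-homog -> Emp p = da%:R *: p.
Proof.
move=> hp; rewrite [in LHS](mpolyE p).
rewrite (big_morph _ EmpD Emp0) [in RHS](mpolyE p) scaler_sumr.
apply: eq_big_seq => m hm; rewrite EmpZ EmpX.
by rewrite (dhomog_mf hp hm) scalerA mulrC -scalerA.
Qed.

Lemma euler_gen (R : comRingType) (F : fieldType) (phi : R -> F)
  (phi0 : phi 0 = 0)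
  (phiD : forall x y, phi (x + y) = phi x + phi y)
  (phiB : forall x y, phi (x - y) = phi x - phi y)
  (phiM : forall x y, phi (x * y) = phi x * phi y)
  (phiZ : forall k x, phi (x *+ k) = phi x *+ k)
  (m : nat) (X dp dq : 'I_m -> R) (p q : R) (da db : nat) :
  phi q != 0 -> \sum_j X j * dp j = p *+ da -> \sum_j X j * dq j = q *+ db ->
  \sum_j phi (X j) * (phi (dp j * q - p * dq j) / phi (q * q))
   = (da%:Z - db%:Z)%:~R * (phi p / phi q).
Proof.
move=> q0 hp hq.
have phiS : forall (G : 'I_m -> R), phi (\sum_j G j) = \sum_j phi (G j).
  by move=> G; apply: (big_morph _ phiD phi0).
have -> : \sum_j phi (X j) * (phi (dp j * q - p * dq j) / phi (q * q))
   = phi (\sum_j X j * (dp j * q - p * dq j)) / phi (q * q).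
  by rewrite phiS mulr_suml; apply: eq_bigr => j _; rewrite [phi (X j * _)]phiM mulrA.
have -> : \sum_j X j * (dp j * q - p * dq j)
   = (\sum_j X j * dp j) * q - p * (\sum_j X j * dq j).
  rewrite mulr_suml mulr_sumr -sumrB; apply: eq_bigr => j _.
  by ring.
rewrite hp hq !phiB !phiM !phiZ -[phi p *+ da]mulr_natr -[phi q *+ db]mulr_natr.
have -> : (da%:Z - db%:Z)%:~R = da%:R - db%:R :> F by rewrite rmorphB.
by field.
Qed.

Definition Eop {n} (g : RatF n) : RatF n := \sum_(j < n.+1) toF 'X_j * fderiv j g.

Lemma euler_frac {n} (d : int) (f : RatF n) : homog_frac d f -> Eop f = d%:~R * f.
Proof.
case=> p [q [da [db [q0 hp hq hd ->]]]].
rewrite /Eop.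
under eq_bigr => j _ do rewrite (fderiv_frac _ _ _ q0).
rewrite -hd.
have hq' := toF_neq0 q0.
exact: (@euler_gen (Pol n) (RatF n) (@toF n) (@toF0 n) (@toFD n) (@toFB n) (@toFM n)
  (@toFMn n) n.+1 (fun j => 'X_j) (fun j => mderiv j p) (fun j => mderiv j q) p q da db hq'
  (etrans (euler_mpoly p da hp) (scaler_nat _ _)) (etrans (euler_mpoly q db hq) (scaler_nat _ _))).
Qed.

Lemma fderivX {n} i j : fderiv i (toF ('X_j : Pol n)) = (j == i)%:R.
Proof.
rewrite fderiv_toF mderivX mnm1E.
case: eqP => [->|_] /=.
  have -> : (U_(i) - U_(i))%MM = 0%MM :> 'X_{1..n.+1}.
    by apply/mnmP => k; rewrite mnmBE subnn mnm0E.
  by rewrite mpolyX0 scale1r toF1.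
by rewrite scale0r toF0.
Qed.

Lemma sum_delta (R : pzRingType) (m : nat) (i : 'I_m) (F : 'I_m -> R) :
  \sum_(j < m) (j == i)%:R * F j = F i.
Proof. by rewrite (bigD1 i) //= eqxx mul1r big1 ?addr0 // => j /negbTE ->; rewrite mul0r. Qed.

Lemma Eop_shift {n} (c : int) (g : RatF n) i :
  Eop g = c%:~R * g -> Eop (fderiv i g) = (c - 1)%:~R * fderiv i g.
Proof.
move=> h; have h2 := congr1 (fderiv i) h.
rewrite fderivZint /Eop fderiv_sum in h2.
have e : \sum_(j < n.+1) fderiv i (toF 'X_j * fderiv j g)
   = \sum_(j < n.+1) ((j == i)%:R * fderiv j g + toF 'X_j * fderiv j (fderiv i g)).
  by apply: eq_bigr => j _; rewrite fderivM fderivX fderiv_comm.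
rewrite e in h2.
rewrite big_split /= in h2.
rewrite sum_delta in h2.
have h3 : Eop (fderiv i g) = c%:~R * fderiv i g - fderiv i g.
  by rewrite -h2 [fderiv i g + _]addrC addrK.
by rewrite h3 rmorphB /= mulrBl mul1r.
Qed.

Lemma Eop_iter {n} (c : int) (g : RatF n) i a :
  Eop g = c%:~R * g -> Eop (iter a (fderiv i) g) = (c - a%:Z)%:~R * iter a (fderiv i) g.
Proof.
move=> h; elim: a => [|a IH] /=; first by rewrite subr0.
rewrite (@Eop_shift n _ _ i IH); congr (_%:~R * _); lia.
Qed.

Lemma Eop_foldr {n} (c : int) (f : RatF n) (m : 'X_{1..n.+1}) (s : seq 'I_n.+1) :
  Eop f = c%:~R * f ->
  Eop (foldr (fun i g => iter (m i) (fderiv i) g) f s)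
  = (c - (\sum_(i <- s) m i)%N%:Z)%:~R * foldr (fun i g => iter (m i) (fderiv i) g) f s.
Proof.
move=> h; elim: s => [|i s IH] /=; first by rewrite big_nil subr0.
rewrite (@Eop_iter n _ _ _ _ IH) big_cons; congr (_%:~R * _); lia.
Qed.

Lemma Eop_fderivI {n} (c : int) (f : RatF n) (m : 'X_{1..n.+1}) :
  Eop f = c%:~R * f -> Eop (fderivI m f) = (c - (mdeg m)%:Z)%:~R * fderivI m f.
Proof.
move=> h; rewrite /fderivI (@Eop_foldr n _ _ _ _ h); congr ((_ - _)%:~R * _).
by rewrite big_enum mdegE.
Qed.

Lemma fact_dvd_gen (I : Type) (r : seq I) (F : I -> nat) :
  (\prod_(i <- r) (F i)`! %| (\sum_(i <- r) F i)`!)%N.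
Proof.
elim: r => [|i r IH]; first by rewrite !big_nil.
rewrite !big_cons.
have h : ((F i)`! * (\sum_(j <- r) F j)`! %| (F i + \sum_(j <- r) F j)`!)%N.
  rewrite -(bin_fact (leq_addr (\sum_(j <- r) F j) (F i))) addKn.
  exact: dvdn_mull.
apply: dvdn_trans h; exact: dvdn_mul.
Qed.

Lemma prod_fact_gt0 (I : Type) (r : seq I) (F : I -> nat) :
  (0 < \prod_(i <- r) (F i)`!)%N.
Proof. by elim: r => [|i r IH]; rewrite ?big_nil ?big_cons // muln_gt0 fact_gt0. Qed.

Lemma prod_shift n (m : 'X_{1..n.+1}) j :
  (\prod_(i < n.+1) ((m + U_(j))%MM i)`! = (m j).+1 * \prod_(i < n.+1) (m i)`!)%N.
Proof.
rewrite (bigD1 j) //= [in RHS](bigD1 j) //= mnmDE mnm1E eqxx addn1 factS -mulnA.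
congr (_ * (_ * _))%N; apply: eq_bigr => i /negbTE ij.
by rewrite mnmDE mnm1E eq_sym ij addn0.
Qed.

Lemma multinom_shift n k (m : 'X_{1..n.+1}) j : mdeg m = k ->
  ((m j).+1 * Defs.multinom k.+1 (m + U_(j))%MM = k.+1 * Defs.multinom k m)%N.
Proof.
move=> hm; rewrite /Defs.multinom prod_shift.
set P := (\prod_(i < n.+1) (m i)`!)%N.
have hP : (P %| k`!)%N by rewrite /P -hm mdegE; exact: fact_dvd_gen.
have hP' : ((m j).+1 * P %| k.+1`!)%N.
  rewrite -prod_shift.
  have -> : k.+1 = mdeg (m + U_(j))%MM by rewrite mdegD mdeg1 hm addn1.
  rewrite [mdeg _]mdegE; exact: fact_dvd_gen.
have P0 : (0 < P)%N by exact: prod_fact_gt0.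
apply/eqP; rewrite -(eqn_pmul2r P0).
have e1 : ((m j).+1 * ((k.+1)`! %/ ((m j).+1 * P)) * P = (k.+1)`!)%N.
  by rewrite mulnAC mulnC divnK.
have e2 : (k.+1 * (k`! %/ P) * P = (k.+1)`!)%N by rewrite -mulnA divnK // factS.
by rewrite e1 e2.
Qed.

Lemma iter_comm {n} i j a (g : RatF n) :
  iter a (fderiv i) (fderiv j g) = fderiv j (iter a (fderiv i) g).
Proof.
elim: a => [|a IH] /=; first reflexivity.
by rewrite IH fderiv_comm.
Qed.

Lemma foldr_eq {n} (m m' : 'X_{1..n.+1}) (s : seq 'I_n.+1) (g : RatF n) :
  {in s, forall i, m' i = m i} ->
  foldr (fun i g => iter (m' i) (fderiv i) g) g s
  = foldr (fun i g => iter (m i) (fderiv i) g) g s.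
Proof.
elim: s => [|i s IH] h /=; first reflexivity.
rewrite IH; last by move=> x xs; apply: h; rewrite in_cons xs orbT.
by rewrite h ?mem_head.
Qed.

Lemma foldr_shift {n} (m : 'X_{1..n.+1}) j (s : seq 'I_n.+1) (g : RatF n) :
  uniq s -> j \in s ->
  foldr (fun i g => iter ((m + U_(j))%MM i) (fderiv i) g) g s
  = fderiv j (foldr (fun i g => iter (m i) (fderiv i) g) g s).
Proof.
elim: s => [|i s IH] //= /andP[nis us]; rewrite in_cons => /orP[/eqP eji | js].
  subst i; rewrite mnmDE mnm1E eqxx addn1 /=.
  congr (fderiv j (iter _ _ _)); apply: foldr_eq => x xs.
  rewrite mnmDE mnm1E; case: eqP => [ex|_]; last by rewrite addn0.
  by rewrite ex xs in nis.
have ij : (j == i) = false by apply/negbTE; apply: contraNneq nis => <-.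
by rewrite mnmDE mnm1E ij addn0 IH // iter_comm.
Qed.

Lemma fderivI_shift {n} (m : 'X_{1..n.+1}) j (f : RatF n) :
  fderivI (m + U_(j))%MM f = fderiv j (fderivI m f).
Proof. by rewrite /fderivI foldr_shift ?enum_uniq ?mem_enum. Qed.

Lemma sum_pick (R : nmodType) (I : finType) (P : pred I) (F : I -> R) (x : I) :
  P x -> (forall y, P y -> y != x -> F y = 0) -> \sum_(y | P y) F y = F x.
Proof.
move=> Px h; rewrite (bigD1 x) //= big1 ?addr0 // => y /andP[Py yx]; exact: h.
Qed.

Lemma xi_coef {n} k (f : RatF n) (m : 'X_{1..n.+1}) :
  mcoeff m (xi k f) = if mdeg m == k then (Defs.multinom k m)%:R * fderivI m f else 0.
Proof.
rewrite /xi raddf_sum /=.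
have e : forall I : 'X_{1..n.+1 < k.+1},
   mcoeff m (((Defs.multinom k I)%:R * fderivI I f) *: 'X_[(I : 'X_{1..n.+1})])
   = ((I : 'X_{1..n.+1}) == m)%:R * ((Defs.multinom k I)%:R * fderivI I f).
  by move=> I; rewrite mcoeffZ mcoeffX mulrC.
rewrite (eq_bigr _ (fun I _ => e I)).
case: eqP => hm.
  have hb : (mdeg m < k.+1)%N by rewrite hm.
  rewrite (@sum_pick _ _ _ _ (BMultinom hb)) /=; last 2 first.
  - by rewrite hm.
  - by move=> I _; rewrite bmeqP /= => /negbTE ->; rewrite mul0r.
  by rewrite eqxx mul1r.
rewrite big1 // => I hI.
have -> : ((I : 'X_{1..n.+1}) == m) = false.
  by apply/negbTE/eqP => eIm; apply: hm; rewrite -eIm; exact/eqP.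
by rewrite mul0r.
Qed.

Lemma eta_coef {n} (P : Tens n) (m : 'X_{1..n.+1}) :
  mcoeff m (eta_op P) = \sum_(j < n.+1) toF 'X_j * (mcoeff (m + U_(j))%MM P *+ (m j).+1).
Proof.
rewrite /eta_op raddf_sum; apply: eq_bigr => j _.
by rewrite /= mcoeffZ mcoeff_mderiv.
Qed.
Lemma gen1 (R : comRingType) (x y : R) (a c N : nat) :
  (a.+1 * c = N)%N -> x * (c%:R * y *+ a.+1) = N%:R * (x * y).
Proof. move=> <-; rewrite -mulr_natl natrM; ring. Qed.
Lemma gen2 (R : comRingType) (k c : nat) (d : int) (G : R) :
  (k.+1 * c)%:R * ((d - k%:Z)%:~R * G) = (k.+1%:Z * (d - k.+1%:Z + 1))%:~R * (c%:R * G).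
Proof.
have -> : (k.+1%:Z * (d - k.+1%:Z + 1)) = k.+1%:Z * (d - k%:Z) by lia.
rewrite intrM natrM; ring.
Qed.

Local Close Scope quotient_scope.

Theorem lemma4p3 (n : nat) (k : nat) (hk : (0 < k)%N) (d : int) (f : RatF n) :
  homog_frac d f ->
  eta_op (xi k f) = ((k%:Z * (d - k%:Z + 1))%:~R : RatF n) *: xi k.-1 f.
Proof.
move=> hf; have hE := euler_frac d f hf.
apply/mpolyP => m.
rewrite eta_coef mcoeffZ xi_coef.
case: k hk => // k _.
rewrite -[k.+1.-1]/k.
have hx : forall j : 'I_n.+1, mcoeff (m + U_(j))%MM (xi k.+1 f)
   = if mdeg m == k then (Defs.multinom k.+1 (m + U_(j))%MM)%:R * fderiv j (fderivI m f)
     else 0.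
  by move=> j; rewrite xi_coef mdegD mdeg1 addn1 eqSS fderivI_shift.
have e1 : \sum_(j < n.+1) toF 'X_j * (mcoeff (m + U_(j))%MM (xi k.+1 f) *+ (m j).+1)
   = \sum_(j < n.+1) toF 'X_j * ((if mdeg m == k then
        (Defs.multinom k.+1 (m + U_(j))%MM)%:R * fderiv j (fderivI m f) else 0) *+ (m j).+1).
  by apply: eq_bigr => j _; rewrite hx.
rewrite e1; case: eqP => hm.
  have e2 : \sum_(j < n.+1) toF 'X_j * ((Defs.multinom k.+1 (m + U_(j))%MM)%:R
                * fderiv j (fderivI m f) *+ (m j).+1)
     = (k.+1 * Defs.multinom k m)%:R * Eop (fderivI m f).
    rewrite /Eop mulr_sumr; apply: eq_bigr => j _.
    by apply: gen1; apply: multinom_shift.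
  rewrite e2 (@Eop_fderivI n _ _ _ hE) hm.
  exact: gen2.
rewrite big1 ?mulr0 // => j _.
by rewrite mul0rn mulr0.
Qed.
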